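(* Let $\alpha,\beta_1,\beta_2,\gamma_1,\gamma_2\in\widehat{\mathbb{F}_q^\times}$. (i) Suppose $\varepsilon\notin\{\alpha,\beta_2,\beta_1\overline{\gamma_1},\beta_2\overline{\gamma_2}\}$. Then for every $\lambda\in\mathbb{F}_q$, $$F_2\!\left({\alpha;\beta_1,\beta_2\atop\gamma_1,\gamma_2};\lambda,1\right)=\frac{(\overline{\beta_2}\gamma_2)_{\overline{\alpha}}}{(\gamma_2)^\circ_{\overline{\alpha}}}\,{}_3F_2\!\left({\alpha,\beta_1,\alpha\overline{\gamma_2}\atop\gamma_1,\alpha\beta_2\overline{\gamma_2}};\lambda\right).$$ (ii) Suppose $\varepsilon\notin\{\alpha,\beta_1,\beta_2,\beta_1\overline{\gamma_1},\beta_2\overline{\gamma_2}\}$. Then for every $\lambda\in\mathbb{F}_q\setminus\{1\}$, $$F_2\!\left({\alpha;\beta_1,\beta_2\atop\gamma_1,\gamma_2};\lambda,1-\lambda\right)=\frac{(\overline{\beta_2}\gamma_2)_{\overline{\alpha}}}{(\gamma_2)^\circ_{\overline{\alpha}}}\,\overline{\alpha}(1-\lambda)\,{}_3F_2\!\left({\alpha,\overline{\beta_1}\gamma_1,\alpha\overline{\gamma_2}\atop\gamma_1,\alpha\beta_2\overline{\gamma_2}};\frac{\lambda}{\lambda-1}\right).$$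
   Context: $\mathbb{F}_q$ is a finite field with $q$ elements. $\widehat{\mathbb{F}_q^\times}$ is the group of multiplicative characters $\mathbb{F}_q^\times\to\overline{\mathbb{Q}}^\times$, $\varepsilon$ the trivial character; every character (including $\varepsilon$) is extended by $0$ at $0$; $\overline{\eta}=\eta^{-1}$; $\delta(\eta)=1$ if $\eta=\varepsilon$, else $0$. $\psi$ is a fixed non-trivial additive character. $g(\eta)=-\sum_{x\in\mathbb{F}_q^\times}\psi(x)\eta(x)$, $g^\circ(\eta)=q^{\delta(\eta)}g(\eta)$, $(\alpha)_\nu=g(\alpha\nu)/g(\alpha)$, $(\alpha)^\circ_\nu=g^\circ(\alpha\nu)/g^\circ(\alpha)$. For $\lambda\in\mathbb{F}_q$, ${}_3F_2\!\left({\alpha_1,\alpha_2,\alpha_3\atop\beta_1,\beta_2};\lambda\right)=\frac{1}{1-q}\sum_{\nu}\frac{(\alpha_1)_\nu(\alpha_2)_\nu(\alpha_3)_\nu}{(\varepsilon)^\circ_\nu(\beta_1)^\circ_\nu(\beta_2)^\circ_\nu}\nu(\lambda)$; for $x,y\in\mathbb{F}_q$, $F_2\!\left({\alpha;\beta_1,\beta_2\atop\gamma_1,\gamma_2};x,y\right)=\frac{1}{(1-q)^2}\sum_{\nu_1,\nu_2}\frac{(\alpha)_{\nu_1\nu_2}(\beta_1)_{\nu_1}(\beta_2)_{\nu_2}}{(\gamma_1)^\circ_{\nu_1}(\gamma_2)^\circ_{\nu_2}(\varepsilon)^\circ_{\nu_1}(\varepsilon)^\circ_{\nu_2}}\nu_1(x)\nu_2(y)$,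 sums over characters. *)

(* Defs.v *)
From HB Require Import structures.
From mathcomp Require Import all_boot all_order all_fingroup all_algebra all_field.
Set Implicit Arguments. Unset Strict Implicit. Unset Printing Implicit Defensive.
Import GRing.Theory Num.Theory.
Local Open Scope ring_scope.

(* Finite-field hypergeometric functions (Greene/Otsubo style normalisation).
   Characters take values in algC (algebraic closure of Q). *)
Section FFHyp.
Variable F : finFieldType.

Lemma qm1_gt0 : (0 < #|F|.-1)%N.
Proof. by rewrite -card_finField_unit; apply/card_gt0P; exists 1%g; rewrite inE. Qed.

Definition omega : algC := sval (C_prim_root_exists qm1_gt0).

(* A multiplicative character F_q^x -> mu_{q-1} is encoded by its exponents
   e(x) with chi(x) = omega^(e x); it is extended by 0 at 0 (e 0 := 0). *)
Definition expchar (e : {ffun F -> 'I_#|F|.-1}) : F -> algC :=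
  fun x => if x == 0 then 0 else omega ^+ e x.

Definition is_charb (e : {ffun F -> 'I_#|F|.-1}) : bool :=
  (val (e 0) == 0%N) &&
  [forall x : F, forall y : F, ((x != 0) && (y != 0)) ==>
     (val (e (x * y)) == ((e x + e y) %% #|F|.-1)%N)].

Record mchar := MChar { mchar_code : {ffun F -> 'I_#|F|.-1};
                        mchar_codeP : is_charb mchar_code }.
HB.instance Definition _ := [isSub for mchar_code].
HB.instance Definition _ := [Finite of mchar by <:].

Definition mchar_fun (c : mchar) : F -> algC := expchar (mchar_code c).
Coercion mchar_fun : mchar >-> Funclass.

Definition cmul (a b : F -> algC) : F -> algC := fun x => a x * b x.
Definition cinv (a : F -> algC) : F -> algC := fun x => (a x)^-1. (* conj; 0^-1 = 0 *)
Definition eps : F -> algC := fun x => (x != 0)%:R.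
Definition deltaC (a : F -> algC) : bool := [forall x, a x == eps x].

Definition is_addchar (psi : F -> algC) : Prop :=
  psi 0 = 1 /\ forall x y, psi (x + y) = psi x * psi y.

Definition qC : algC := #|F|%:R.

Definition gauss (psi : F -> algC) (chi : F -> algC) : algC :=
  - \sum_(x : F | x != 0) psi x * chi x.
Definition gaussC psi chi : algC := qC ^+ deltaC chi * gauss psi chi.
Definition poch psi (a nu : F -> algC) : algC := gauss psi (cmul a nu) / gauss psi a.
Definition pochC psi (a nu : F -> algC) : algC := gaussC psi (cmul a nu) / gaussC psi a.

Definition hyp32 psi (a1 a2 a3 b1 b2 : F -> algC) (lam : F) : algC :=
  (1 - qC)^-1 * \sum_(nu : mchar)
    (poch psi a1 nu * poch psi a2 nu * poch psi a3 nu
      / (pochC psi eps nu * pochC psi b1 nu * pochC psi b2 nu) * nu lam).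

Definition appellF2 psi (a b1 b2 c1 c2 : F -> algC) (x y : F) : algC :=
  ((1 - qC) ^+ 2)^-1 * \sum_(n1 : mchar) \sum_(n2 : mchar)
    (poch psi a (cmul n1 n2) * poch psi b1 n1 * poch psi b2 n2
      / (pochC psi c1 n1 * pochC psi c2 n2 * pochC psi eps n1 * pochC psi eps n2)
      * n1 x * n2 y).

End FFHyp.

(* Main.v *)
Require Import Defs.
From HB Require Import structures.
From mathcomp Require Import all_boot all_order all_fingroup all_algebra all_field all_solvable.
From mathcomp.algebra_tactics Require Import ring.
From Stdlib Require Import FunctionalExtensionality.
Import GRing.Theory Num.Theory.
Local Open Scope ring_scope.
Set Implicit Arguments. Unset Strict Implicit. Unset Printing Implicit Defensive.

Section Chars.
Variable F : finFieldType.
Local Notation N := #|F|.-1.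
Local Notation om := (omega F).

Lemma om_prim : N.-primitive_root om.
Proof. exact: (svalP (C_prim_root_exists (qm1_gt0 F))). Qed.

Lemma om_expN : om ^+ N = 1.
Proof. exact: prim_expr_order om_prim. Qed.

Lemma om_neq0 : om != 0.
Proof.
apply/eqP=> h; have := om_expN; rewrite h expr0n.
by case: N (qm1_gt0 F) => [//|n _] /= /eqP; rewrite eq_sym oner_eq0.
Qed.

Lemma chE (c : mchar F) x : c x = if x == 0 then 0 else om ^+ mchar_code c x.
Proof. by []. Qed.

Lemma codeP (c : mchar F) : val (mchar_code c 0) = 0%N /\
  forall x y, x != 0 -> y != 0 -> val (mchar_code c (x * y)) = ((mchar_code c x + mchar_code c y) %% N)%N.
Proof.
have := mchar_codeP c; case/andP => /eqP h0 /forallP h; split=> // x y x0 y0.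
by have /forallP/(_ y) := h x; rewrite x0 y0 /= => /eqP.
Qed.

Lemma ch0 (c : mchar F) : c 0 = 0.
Proof. by rewrite chE eqxx. Qed.

Lemma chM (c : mchar F) x y : c (x * y) = c x * c y.
Proof.
rewrite !chE; have [->|x0] := eqVneq x 0; first by rewrite mul0r eqxx mul0r.
have [->|y0] := eqVneq y 0; first by rewrite mulr0 eqxx mulr0.
rewrite mulf_eq0 (negbTE x0) (negbTE y0) /=.
rewrite (codeP c).2 //.
by rewrite prim_expr_mod ?exprD //; exact: om_prim.
Qed.

Lemma chNZ (c : mchar F) x : x != 0 -> c x != 0.
Proof. by move=> x0; rewrite chE (negbTE x0) expf_neq0 // om_neq0. Qed.

Lemma ch1 (c : mchar F) : c 1 = 1.
Proof.
have h := chM c 1 1; rewrite mul1r in h.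
have n0 : c 1 != 0 by apply: chNZ; exact: oner_neq0.
by apply: (mulfI n0); rewrite -h mulr1.
Qed.

Lemma chV (c : mchar F) x : c (x^-1) = (c x)^-1.
Proof.
have [->|x0] := eqVneq x 0; first by rewrite invr0 ch0 invr0.
have h := chM c x x^-1; rewrite divff ?ch1 // in h.
have n0 : c x != 0 by apply: chNZ.
by apply: (mulfI n0); rewrite -h divff.
Qed.

Lemma chN1sq (c : mchar F) : c (-1) * c (-1) = 1.
Proof. by rewrite -chM mulrNN mulr1 ch1. Qed.

Definition ordN (k : nat) : 'I_N := Ordinal (ltn_pmod k (qm1_gt0 F)).

Definition mmul_code (a b : mchar F) : {ffun F -> 'I_N} :=
  [ffun x => ordN (mchar_code a x + mchar_code b x)].

Lemma mmul_codeP a b : is_charb (mmul_code a b).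
Proof.
apply/andP; split.
  by rewrite ffunE /= (codeP a).1 (codeP b).1 mod0n.
apply/forallP=> x; apply/forallP=> y; apply/implyP=> /andP[x0 y0].
rewrite !ffunE /= (codeP a).2 // (codeP b).2 // !modnDm.
by rewrite addnACA.
Qed.

Definition mmul a b : mchar F := MChar (mmul_codeP a b).

Lemma mmulE a b : mchar_fun (mmul a b) = cmul a b.
Proof.
apply: FunctionalExtensionality.functional_extensionality => x.
rewrite /cmul !chE; case: eqP => [_|x0]; first by rewrite mul0r.
by rewrite /= ffunE /= prim_expr_mod ?exprD //; exact: om_prim.
Qed.

Definition minv_code (a : mchar F) : {ffun F -> 'I_N} :=
  [ffun x => ordN (mchar_code a x * N.-1)].

Lemma minv_codeP a : is_charb (minv_code a).
Proof.
apply/andP; split.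
  by rewrite ffunE /= (codeP a).1 mul0n mod0n.
apply/forallP=> x; apply/forallP=> y; apply/implyP=> /andP[x0 y0].
by rewrite !ffunE /= (codeP a).2 // modnMml modnDm mulnDl.
Qed.

Definition minv a : mchar F := MChar (minv_codeP a).

Lemma om_inv k : om ^+ (k * N.-1) = (om ^+ k)^-1.
Proof.
have nz : om ^+ k != 0 by rewrite expf_neq0 // om_neq0.
apply: (mulfI nz); rewrite divff // -exprD -mulnS prednK ?qm1_gt0 //.
by rewrite mulnC exprM om_expN expr1n.
Qed.

Lemma minvE a : mchar_fun (minv a) = cinv a.
Proof.
apply: FunctionalExtensionality.functional_extensionality => x.
rewrite /cinv !chE; case: eqP => [_|x0]; first by rewrite invr0.
by rewrite /= ffunE /= prim_expr_mod ?om_inv //; exact: om_prim.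
Qed.

Definition mone_code : {ffun F -> 'I_N} := [ffun x => ordN 0].
Lemma mone_codeP : is_charb mone_code.
Proof.
apply/andP; split; first by rewrite ffunE /= mod0n.
by apply/forallP=> x; apply/forallP=> y; apply/implyP=> _; rewrite !ffunE /= !mod0n.
Qed.
Definition mone : mchar F := MChar mone_codeP.

Lemma moneE : mchar_fun mone = @eps F.
Proof.
apply: FunctionalExtensionality.functional_extensionality => x.
rewrite /eps chE; have [x0|x0] := eqVneq x 0; first by [].
by rewrite ffunE /= mod0n expr0.
Qed.

End Chars.

Section Chars2.
Variable F : finFieldType.
Local Notation N := #|F|.-1.
Local Notation om := (omega F).

Lemma mchar_eq (a b : mchar F) : (forall x, x != 0 -> a x = b x) -> a = b.
Proof.
move=> h; apply: val_inj; apply/ffunP => x; apply: val_inj.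
have [->|x0] := eqVneq x 0; first by rewrite (codeP a).1 (codeP b).1.
have := h x x0; rewrite !chE (negbTE x0) => /eqP.
rewrite (eq_prim_root_expr (om_prim F)) => /eqP.
by rewrite !modn_small.
Qed.

Lemma deltaCE (c : mchar F) : deltaC c = (c == mone F).
Proof.
apply/idP/eqP => [/forallP h|->].
  apply: mchar_eq => x x0; have /eqP -> := h x.
  by rewrite moneE.
by apply/forallP => x; rewrite moneE.
Qed.

Lemma nontriv (c : mchar F) : c != mone F -> exists2 x, x != 0 & c x != 1.
Proof.
move=> cn; case: (pickP [pred x | (x != 0) && (c x != 1)]) => [x /andP[x0 cx] | h].
  by exists x.
case/eqP: cn; apply: mchar_eq => x x0; have := h x; rewrite /= x0 /= => /negbFE/eqP ->.
by rewrite moneE /eps x0.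
Qed.

Lemma sum_nz : \sum_(x : F) (@eps F) x = N%:R.
Proof.
have -> : \sum_(x : F) (@eps F) x = \sum_(x : F | x != 0) 1.
  by rewrite [RHS]big_mkcond; apply: eq_bigr => x _; rewrite /eps; case: (x != 0).
rewrite -[LHS]/(\sum_(x in [pred x : F | x != 0]) (1:algC)) sumr_const.
have -> : #|[pred x : F | x != 0]| = N by rewrite -(cardC1 (0 : F)).
by [].
Qed.

Lemma sum_ch (c : mchar F) : \sum_(x : F) c x = if c == mone F then N%:R else 0.
Proof.
case: eqP => [->|/eqP cn]; first by rewrite moneE sum_nz.
have [x0 x0n cx] := nontriv cn.
have h : \sum_(x : F) c x = c x0 * \sum_(x : F) c x.
  rewrite [LHS](reindex_inj (mulfI x0n)) /= mulr_sumr.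
  by apply: eq_bigr => x _; rewrite chM.
apply/eqP; move: h => /eqP; rewrite -subr_eq0 -{1}[\sum_x c x]mul1r -mulrBl mulf_eq0.
by rewrite subr_eq0 eq_sym (negbTE cx).
Qed.

Lemma exists_prim : exists w : F, N.-primitive_root w.
Proof.
have hN : forall x : F, x != 0 -> x ^+ N = 1.
  move=> x x0; have := expf_card x.
  have -> : #|F| = N.+1 by rewrite prednK //; apply/card_gt0P; exists 0.
  by rewrite exprSr => h; apply: (mulIf x0); rewrite mul1r.
have := @has_prim_root F N (enum [pred x : F | x != 0]) (qm1_gt0 F).
case/(_ _ _ _)/hasP.
- apply/allP => x; rewrite mem_enum unity_rootE => x0; apply/eqP; exact: hN.
- exact: enum_uniq.
- by rewrite -cardE -(cardC1 (0 : F)).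
by move=> w _ pw; exists w.
Qed.

Lemma exists_sep (z : F) : z != 0 -> z != 1 -> exists c : mchar F, c z != 1.
Proof.
move=> z0 z1.
have [w pw] := exists_prim.
have hN : forall x : F, x != 0 -> x ^+ N = 1.
  move=> x x0; have := expf_card x.
  have -> : #|F| = N.+1 by rewrite prednK //; apply/card_gt0P; exists 0.
  by rewrite exprSr => h; apply: (mulIf x0); rewrite mul1r.
pose dl (x : F) : 'I_N := if (x != 0) =P true is ReflectT p then sval (prim_rootP pw (hN x p)) else ordN F 0.
have dlE x : x != 0 -> x = w ^+ dl x.
  move=> x0; rewrite /dl; case: eqP => [p|]; last by rewrite x0.
  exact: (svalP (prim_rootP pw (hN x p))).
have dl0 : val (dl 0) = 0%N.
  rewrite /dl; case: eqP => [p|_]; last by rewrite /= mod0n.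
  by exfalso; move: (p); rewrite eqxx.
have P : is_charb [ffun x => dl x].
  apply/andP; split; first by rewrite ffunE dl0.
  apply/forallP=> x; apply/forallP=> y; apply/implyP=> /andP[x0 y0].
  rewrite !ffunE; have xy0 : x * y != 0 by rewrite mulf_neq0.
  have := dlE _ xy0; rewrite {1}(dlE _ x0) {1}(dlE _ y0) -exprD => /eqP.
  rewrite (eq_prim_root_expr pw) => /eqP h.
  by rewrite h modn_small.
exists (MChar P); rewrite chE (negbTE z0) /= ffunE.
apply/eqP => /eqP; rewrite -(expr0 om) (eq_prim_root_expr (om_prim F)) mod0n.
rewrite modn_small // => /eqP h.
by move: z1; rewrite (dlE _ z0) h expr0 eqxx.
Qed.

Lemma mmul_inj (a : mchar F) : injective (mmul a).
Proof.
move=> b c h; apply: mchar_eq => x x0.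
have := congr1 (fun f : mchar F => mchar_fun f x) h; rewrite /= !mmulE /cmul.
by move/mulfI; apply; apply: chNZ.
Qed.

Lemma ortho0 (z : F) : \sum_(n : mchar F) n z = #|{: mchar F}|%:R * (z == 1)%:R.
Proof.
have [->|z1] := eqVneq z 1.
  by rewrite mulr1 (eq_bigr (fun _ => 1)) ?sumr_const // => n _; rewrite ch1.
have [->|z0] := eqVneq z 0.
  by rewrite big1 ?mulr0 // => n _; rewrite ch0.
have [c cz] := exists_sep z0 z1.
have h : \sum_(n : mchar F) n z = c z * \sum_(n : mchar F) n z.
  rewrite [LHS](reindex_inj (mmul_inj (a:=c))) /= mulr_sumr.
  by apply: eq_bigr => n _; rewrite mmulE.
rewrite mulr0; apply/eqP; move: h => /eqP; rewrite -subr_eq0 -{1}[\sum_(n : mchar F) n z]mul1r -mulrBl mulf_eq0.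
by rewrite subr_eq0 eq_sym (negbTE cz).
Qed.

Lemma card_mchar : #|{: mchar F}|%:R = N%:R :> algC.
Proof.
have e : \sum_(z : F) \sum_(n : mchar F) n z = \sum_(n : mchar F) \sum_(z : F) n z.
  by rewrite exchange_big.
rewrite (eq_bigr (fun z => #|{: mchar F}|%:R * (z == 1)%:R)) in e; last by move=> z _; rewrite ortho0.
rewrite (eq_bigr (fun n : mchar F => if n == mone F then N%:R else 0)) in e; last by move=> n _; rewrite sum_ch.
rewrite -big_mkcond /= big_pred1_eq in e.
rewrite -e -mulr_sumr (bigD1 1) //= eqxx big1 ?addr0 ?mulr1 // => z /negbTE ->.
by [].
Qed.

Lemma ortho_ch (z : F) : \sum_(n : mchar F) n z = N%:R * (z == 1)%:R.
Proof. by rewrite ortho0 card_mchar. Qed.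

End Chars2.

Ltac genG := repeat match goal with
 | |- context[gaussC ?p ?c] => let t := fresh "G" in set (t := gaussC p c) in *; clearbody t
 | |- context[gauss ?p ?c] => let t := fresh "G" in set (t := gauss p c) in *; clearbody t
 | |- context[qC ?F] => let t := fresh "Q" in set (t := qC F) in *; clearbody t
 end.
Ltac nz := repeat (apply/andP; split); try assumption.

Section Gauss.
Variable F : finFieldType.
Variable psi : F -> algC.
Hypothesis Hpsi : is_addchar psi.
Hypothesis Hpsi_nt : exists x : F, psi x != 1.
Local Notation N := #|F|.-1.
Local Notation q := (qC F).
Local Notation g c := (gauss psi (mchar_fun c)).
Local Notation gC c := (gaussC psi (mchar_fun c)).

Lemma mmulV (a b : mchar F) x : mmul a b x = a x * b x.
Proof. by rewrite mmulE. Qed.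
Lemma minvV (a : mchar F) x : minv a x = (a x)^-1.
Proof. by rewrite minvE. Qed.
Lemma moneV x : mone F x = (x != 0)%:R.
Proof. by rewrite moneE. Qed.

Ltac meq := let x := fresh "x" in let x0 := fresh "x0" in
  apply: mchar_eq => x x0; rewrite ?(mmulV, minvV, moneV) ?x0 /=; field;
  repeat (apply/andP; split); try done; apply: chNZ; exact: x0.

Lemma NE : (N%:R : algC) = q - 1.
Proof.
rewrite /qC; have : (0 < #|F|)%N by apply/card_gt0P; exists 0.
by case: #|F| => // n _; rewrite /= mulrSr addrK.
Qed.

Lemma psi0 : psi 0 = 1. Proof. by case: Hpsi. Qed.
Lemma psiD x y : psi (x + y) = psi x * psi y. Proof. by case: Hpsi => _ ->. Qed.

Lemma sum_psi : \sum_(x : F) psi x = 0.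
Proof.
have [x0 hx] := Hpsi_nt.
have h : \sum_(x : F) psi x = psi x0 * \sum_(x : F) psi x.
  rewrite [LHS](reindex_inj (addrI x0)) /= mulr_sumr.
  by apply: eq_bigr => x _; rewrite psiD.
apply/eqP; move: h => /eqP; rewrite -subr_eq0 -{1}[\sum_(x : F) psi x]mul1r -mulrBl mulf_eq0.
by rewrite subr_eq0 eq_sym (negbTE hx).
Qed.

Lemma sum_psi_mul u : \sum_(x : F) psi (u * x) = if u == 0 then q else 0.
Proof.
case: eqP => [->|/eqP u0].
  rewrite (eq_bigr (fun _ => 1)) ?sumr_const; last by move=> x _; rewrite mul0r psi0.
  by rewrite /qC.
by have h := sum_psi; rewrite (reindex_inj (mulfI u0)) in h.
Qed.

Lemma gaussE (c : mchar F) : g c = - \sum_(x : F) psi x * c x.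
Proof.
rewrite /gauss; congr (- _); rewrite [RHS](bigD1 0) //= ch0 mulr0 add0r.
by [].
Qed.

Lemma twist (c : mchar F) u : u != 0 ->
  \sum_(x : F) psi (u * x) * c x = - (c u)^-1 * g c.
Proof.
move=> u0; rewrite gaussE mulrN mulNr opprK mulr_sumr.
rewrite [LHS](reindex_inj (mulfI (invr_neq0 u0))) /=.
apply: eq_bigr => x _; rewrite mulrA divff // mul1r chM chV.
by rewrite mulrCA.
Qed.

Lemma g_one : g (mone F) = 1.
Proof.
rewrite gaussE (eq_bigr (fun x => psi x - psi x * (x == 0)%:R)); last first.
  by move=> x _; rewrite moneV; case: (x == 0); rewrite ?mulr0 ?mulr1 ?subr0 ?subrr.
rewrite sumrB sum_psi sub0r opprK (bigD1 0) //= eqxx mulr1 psi0 big1 ?addr0 //.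
by move=> x /negbTE ->; rewrite mulr0.
Qed.


Lemma sum_psi_mulE u : \sum_(x : F) psi (u * x) = q * (u == 0)%:R.
Proof. by rewrite sum_psi_mul; case: eqP; rewrite ?mulr1 ?mulr0. Qed.

Lemma gg_inv (c : mchar F) : c != mone F -> g c * g (minv c) = c (-1) * q.
Proof.
move=> cn.
rewrite !gaussE mulrNN mulr_sumr.
rewrite (eq_bigr (fun y => \sum_(t : F) psi (y * (1 + t)) * c t)); last first.
  move=> y _; have [->|y0] := eqVneq y 0.
    rewrite minvV ch0 invr0 !mulr0.
    rewrite (eq_bigr (fun t => c t)) ?sum_ch ?(negbTE cn) // => t _.
    by rewrite mul0r psi0 mul1r.
  rewrite mulr_suml [LHS](reindex_inj (mulfI y0)) /=.
  apply: eq_bigr => t _; rewrite minvV chM mulrDr mulr1 psiD.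
  have cy : c y != 0 by apply: chNZ.
  by field.
rewrite exchange_big /=.
rewrite (eq_bigr (fun t => c t * (q * ((1 + t) == 0)%:R))); last first.
  by move=> t _; rewrite -mulr_suml mulrC; congr (_ * _); rewrite -sum_psi_mulE; apply: eq_bigr => y _; rewrite mulrC.
rewrite (bigD1 (-1)) //= subrr eqxx mulr1 big1 ?addr0 // => t t1.
have -> : (1 + t == 0) = false by apply/negbTE; apply: contra t1; rewrite addrC addr_eq0.
by rewrite mulr0 mulr0.
Qed.

Definition J0 (X Y : mchar F) := \sum_(t : F) X t * Y (1 - t).

Lemma GJ (X Y : mchar F) :
  g X * g Y = - g (mmul X Y) * J0 X Y + Y (-1) * (mmul X Y == mone F)%:R * N%:R.
Proof.
rewrite !gaussE mulrNN mulr_suml.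
rewrite (eq_bigr (fun x => \sum_(u : F) psi u * X x * Y (u - x))); last first.
  move=> x _; rewrite mulr_sumr [LHS](reindex_inj (addIr (- x))) /=.
  apply: eq_bigr => u _.
  have -> : psi u = psi x * psi (u - x) by rewrite -psiD addrC subrK.
  by ring.
rewrite exchange_big /= (bigD1 0) //=.
rewrite (eq_bigr (fun u => Y (-1) * mmul X Y u)); last first.
  by move=> x _; rewrite psi0 mul1r sub0r -(mulN1r x) chM mmulV; ring.
rewrite -mulr_sumr sum_ch.
rewrite (eq_bigr (fun u => psi u * mmul X Y u * J0 X Y)); last first.
  move=> u u0; rewrite /J0 mulr_sumr [LHS](reindex_inj (mulfI u0)) /=.
  apply: eq_bigr => t _; have -> : u - u * t = u * (1 - t) by ring.
  rewrite mmulV !chM.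
  by ring.
rewrite -mulr_suml opprK [X in _ = X * _ + _](bigD1 0) //= ch0 mulr0 add0r.
by case: eqP => _ /=; ring.
Qed.


Lemma minv_mone : minv (mone F) = mone F.
Proof. by apply: mchar_eq => x x0; rewrite minvV !moneV x0 invr1. Qed.

Lemma minvK (a : mchar F) : minv (minv a) = a.
Proof. meq. Qed.

Lemma q_neq0 : q != 0.
Proof. by rewrite /qC pnatr_eq0 -lt0n; apply/card_gt0P; exists 0. Qed.

Lemma mone_N1 : mone F (-1) = 1.
Proof. by rewrite moneV oppr_eq0 oner_eq0. Qed.

Lemma Jac (X Y : mchar F) : Y != mone F -> J0 X Y * gC (mmul X Y) = - g X * g Y.
Proof.
move=> Yn; have h := GJ X Y.
rewrite /gaussC deltaCE; case: eqP => [e|/eqP ne].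
  have hx : X = minv Y.
    apply: mchar_eq => x x0; have := congr1 (fun c : mchar F => mchar_fun c x) e.
    rewrite /= mmulV moneV x0 minvV /= => ex.
    have yx : Y x != 0 by apply: chNZ.
    by apply: (mulIf yx); rewrite ex mulVf.
  rewrite e g_one hx in h *.
  have gg := gg_inv Yn; rewrite mulrC in gg.
  rewrite gg NE eqxx /= mulr1 in h; rewrite mulNr gg /= expr1 mulr1.
  have hJ : J0 (minv Y) Y = - Y (-1) by apply: (addrI (Y (-1) * q)); rewrite {1}h; ring.
  by rewrite hJ mulNr.
by rewrite mulNr h (negbTE ne) /= expr0 mul1r; ring.
Qed.

Lemma gC_inv (c : mchar F) : gC c * g (minv c) = c (-1) * q.
Proof.
rewrite /gaussC deltaCE; case: eqP => [->|/eqP cn].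
  by rewrite minv_mone g_one mone_N1 /= expr1 !mulr1 mul1r.
by rewrite /= expr0 mul1r gg_inv.
Qed.

Lemma chN1_neq0 (c : mchar F) : c (-1) != 0.
Proof. by apply: chNZ; rewrite oppr_eq0 oner_eq0. Qed.

Lemma g_neq0 (c : mchar F) : g c != 0.
Proof.
apply/eqP => h0; have := gC_inv c; rewrite /gaussC h0 mulr0 mul0r => /esym/eqP.
by rewrite mulf_eq0 (negbTE (chN1_neq0 c)) (negbTE q_neq0).
Qed.

Lemma gC_neq0 (c : mchar F) : gC c != 0.
Proof. by rewrite /gaussC mulf_neq0 ?g_neq0 // expf_neq0 // q_neq0. Qed.

Lemma chN1_sq (c : mchar F) : (c (-1))^-1 = c (-1).
Proof.
have h := chN1sq c; have n0 := chN1_neq0 c.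
by apply: (mulfI n0); rewrite h divff.
Qed.



Lemma pochE (a n : mchar F) : poch psi a n = g (mmul a n) / g a.
Proof. by rewrite /poch -mmulE. Qed.

Lemma pochCE (a n : mchar F) : pochC psi a n = gC (mmul a n) / gC a.
Proof. by rewrite /pochC -mmulE. Qed.

Lemma cmul_eps (n : mchar F) : cmul (@eps F) n = n.
Proof.
apply: functional_extensionality => x; rewrite /cmul /eps.
by have [->|x0] := eqVneq x 0; rewrite ?ch0 ?mulr0 // mul1r.
Qed.

Lemma gC_eps : gaussC psi (@eps F) = q.
Proof. by rewrite -moneE /gaussC deltaCE eqxx g_one /= expr1 mulr1. Qed.

Lemma inv_pochC_eps (n : mchar F) : (pochC psi (@eps F) n)^-1 = n (-1) * g (minv n).
Proof.
rewrite /pochC cmul_eps gC_eps invf_div.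
have h := gC_inv n; have n0 := gC_neq0 n; have m0 := chN1_neq0 n.
have hg : g (minv n) = n (-1) * q / gC n by rewrite -h mulrAC divff // mul1r.
by rewrite hg !mulrA chN1sq mul1r.
Qed.

Definition BIN (a : mchar F) (u : F) :=
  \sum_(n : mchar F) poch psi a n / pochC psi (@eps F) n * n u.

Lemma inv_test (x y u : F) : x != 0 -> u != 0 -> (x * y^-1 * - u == 1) = (y == - u * x).
Proof.
move=> x0 u0; have [->|y0] := eqVneq y 0.
  by rewrite invr0 mulr0 mul0r [0 == 1]eq_sym oner_eq0 [0 == _]eq_sym mulf_eq0 oppr_eq0 (negbTE u0) (negbTE x0).
apply/eqP/eqP => [h|->].
  by apply: (mulIf (invr_neq0 y0)); rewrite divff // -h; ring.
by field; rewrite x0 oppr_eq0 u0.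
Qed.

Lemma BIN_E (a : mchar F) u : u != 0 ->
  BIN a u = (1 - q) * (a (1 - u))^-1 + (u == 1)%:R * (a == mone F)%:R * N%:R ^+ 2.
Proof.
move=> u0.
have E (n : mchar F) : g (mmul a n) * g (minv n) * (n (-1) * n u) =
   \sum_(x : F) \sum_(y : F) psi x * a x * psi y * n (x * y^-1 * - u).
  rewrite !gaussE mulrNN -mulrA mulr_suml; apply: eq_bigr => x _.
  rewrite mulr_suml mulr_sumr; apply: eq_bigr => y _.
  rewrite mmulV minvV !chM chV -(mulN1r u) chM; ring.
have -> : BIN a u = (g a)^-1 * \sum_(n : mchar F) \sum_(x : F) \sum_(y : F)
      psi x * a x * psi y * n (x * y^-1 * - u).
  rewrite /BIN mulr_sumr; apply: eq_bigr => n _.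
  by rewrite -E pochE inv_pochC_eps; ring.
rewrite exchange_big /=.
rewrite (eq_bigr (fun x => \sum_(y : F) psi x * a x * psi y * (N%:R * (x * y^-1 * - u == 1)%:R))); last first.
  move=> x _; rewrite exchange_big /=; apply: eq_bigr => y _.
  by rewrite -mulr_sumr ortho_ch.
rewrite (eq_bigr (fun x => N%:R * (psi ((1 - u) * x) * a x))); last first.
  move=> x _; have [->|x0] := eqVneq x 0.
    by rewrite ch0 !mulr0 big1 // => y _; rewrite !mul0r.
  rewrite (bigD1 (- u * x)) //= inv_test // eqxx big1 ?addr0.
    by rewrite mulrBl mul1r psiD mulNr /=; ring.
  by move=> y /negbTE yn; rewrite inv_test // yn mulr0 mulr0.
rewrite -mulr_sumr.
have [->|u1] := eqVneq u 1.
  rewrite subrr ch0 invr0 mulr0 add0r /= mul1r.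
  rewrite (eq_bigr (fun x => a x)) ?sum_ch; last by move=> x _; rewrite mul0r psi0 mul1r.
  case: eqP => [->|_]; first by rewrite g_one invr1 mul1r /=; ring.
  by rewrite /= !mulr0 mul0r.
rewrite twist ?subr_eq0 1?eq_sym // /= mul0r mul0r addr0 NE.
have ga := g_neq0 a.
by field; rewrite chNZ ?subr_eq0 1?eq_sym //= eq_sym.
Qed.

Definition S21 (a b c : mchar F) (x : F) := \sum_(n : mchar F)
  poch psi a n * poch psi b n / (pochC psi c n * pochC psi (@eps F) n) * n x.
Definition II (a B C : mchar F) (x : F) := \sum_(t : F) B t * C (1 - t) * BIN a (x * t).

Lemma pochC_epsE (n : mchar F) : pochC psi (@eps F) n = gC n / q.
Proof. by rewrite /pochC cmul_eps gC_eps. Qed.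

Lemma rep (a b c : mchar F) x : b != c ->
  S21 a b c x * (g b * g (mmul (minv b) c)) = - gC c * II a b (mmul (minv b) c) x.
Proof.
move=> bc; set Y := mmul (minv b) c.
have hY : Y != mone F.
  apply: contra bc => /eqP e; apply/eqP; apply: mchar_eq => x0 x00.
  have := congr1 (fun f : mchar F => mchar_fun f x0) e.
  rewrite /= mmulV minvV moneV x00 /= => h.
  have bx : b x0 != 0 by apply: chNZ.
  by apply: (mulIf (invr_neq0 bx)); rewrite divff // mulrC h.
have hJ n : J0 (mmul b n) Y = - g (mmul b n) * g Y / gC (mmul c n).
  have := Jac (mmul b n) hY.
  rewrite (_ : mmul (mmul b n) Y = mmul c n); last by rewrite /Y; meq.
  by move=> h; rewrite -h mulfK // gC_neq0.
have -> : II a b Y x = \sum_(n : mchar F) poch psi a n / pochC psi (@eps F) n * n x * J0 (mmul b n) Y.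
  rewrite /II /J0 (eq_bigr (fun t => \sum_(n : mchar F) b t * Y (1 - t) * (poch psi a n / pochC psi (@eps F) n * n (x * t)))); last first.
    by move=> t _; rewrite /BIN mulr_sumr.
  rewrite exchange_big /=; apply: eq_bigr => n _.
  rewrite mulr_sumr; apply: eq_bigr => t _.
  by rewrite mmulV chM; ring.
rewrite /S21 mulr_suml mulr_sumr; apply: eq_bigr => n _.
rewrite hJ !pochE !pochCE !pochC_epsE.
have h1 := g_neq0 b; have h2 := gC_neq0 c; have h3 := gC_neq0 (mmul c n).
have h4 := gC_neq0 n; have h5 := q_neq0; have h6 := g_neq0 a.
genG; field; nz.
Qed.


Lemma BIN0 (a : mchar F) : BIN a 0 = 0.
Proof. by rewrite /BIN big1 // => n _; rewrite ch0 mulr0. Qed.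

Lemma II_split (a A D : mchar F) (z : F) : z != 0 ->
  II a A D z = (1 - q) * (\sum_(t : F) A t * D (1 - t) * (a (1 - z * t))^-1)
     + (a == mone F)%:R * N%:R ^+ 2 * (A z^-1 * D (1 - z^-1)).
Proof.
move=> z0; rewrite /II.
rewrite (eq_bigr (fun t => (1 - q) * (A t * D (1 - t) * (a (1 - z * t))^-1)
    + (a == mone F)%:R * N%:R ^+ 2 * (A t * D (1 - t) * ((z * t) == 1)%:R))); last first.
  move=> t _; have [->|t0] := eqVneq t 0; first by rewrite !ch0 !mul0r !mulr0 addr0.
  by rewrite BIN_E ?mulf_neq0 //; ring.
rewrite big_split /= -mulr_sumr -mulr_sumr; congr (_ + _ * _).
rewrite (bigD1 z^-1) //= divff // eqxx mulr1 big1 ?addr0 // => t tn.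
have -> : (z * t == 1) = false.
  apply/negbTE; apply: contra tn => /eqP h; apply/eqP.
  by apply: (mulfI z0); rewrite h divff.
by rewrite mulr0.
Qed.

Lemma II_pfaff (a B C : mchar F) x : x != 1 ->
  II a B C x = (a (1 - x))^-1 * II a C B (x / (x - 1)).
Proof.
move=> x1; have [->|x0] := eqVneq x 0.
  by rewrite mul0r /II !big1 ?mulr0 // => t _; rewrite mul0r BIN0 mulr0.
have x10 : x - 1 != 0 by rewrite subr_eq0.
have x'0 : x / (x - 1) != 0 by rewrite mulf_neq0 ?invr_neq0.
have ax : a (1 - x) != 0 by apply: chNZ; rewrite subr_eq0 eq_sym.
rewrite !II_split //.
have -> : \sum_(t : F) B t * C (1 - t) * (a (1 - x * t))^-1 =
   (a (1 - x))^-1 * \sum_(t : F) C t * B (1 - t) * (a (1 - x / (x - 1) * t))^-1.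
  rewrite mulr_sumr [LHS](reindex_inj (can_inj (fun s => subKr 1 s))) /=.
  apply: eq_bigr => s _.
  have -> : 1 - x * (1 - s) = (1 - x) * (1 - x / (x - 1) * s).
    by field.
  by rewrite subKr chM invfM; ring.
have e1 : (x / (x - 1))^-1 = 1 - x^-1 by field; nz.
have e2 : 1 - (1 - x^-1) = x^-1 by ring.
rewrite e1 e2.
case: eqP => [->|_]; last by rewrite !mul0r !addr0 mulrCA.
rewrite moneV /= subr_eq0 eq_sym x1 /= invr1 mul1r; ring.
Qed.


Lemma J0sym (X Y : mchar F) : J0 X Y = J0 Y X.
Proof.
rewrite /J0 [LHS](reindex_inj (can_inj (fun s => subKr 1 s))) /=.
by apply: eq_bigr => s _; rewrite subKr mulrC.
Qed.

Lemma minv_ne (b c : mchar F) : b != mone F -> mmul (minv b) c != c.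
Proof.
move=> bn; apply: contra bn => /eqP e; apply/eqP; apply: mchar_eq => x x0.
have := congr1 (fun f : mchar F => mchar_fun f x) e.
rewrite /= mmulV minvV moneV x0 /= => h.
have cx : c x != 0 by apply: chNZ.
have bx : b x != 0 by apply: chNZ.
have : (b x)^-1 = 1 by apply: (mulIf cx); rewrite mul1r.
by move/(congr1 GRing.inv); rewrite invrK invr1 => ->; rewrite ?moneV ?x0.
Qed.

Lemma S21_pfaff (a b c : mchar F) x : b != mone F -> b != c -> x != 1 ->
  S21 a b c x = (a (1 - x))^-1 * S21 a (mmul (minv b) c) c (x / (x - 1)).
Proof.
move=> bn bc x1; set b' := mmul (minv b) c.
have b'c : b' != c by apply: minv_ne.
have h1 := rep a x bc.
have h2 := rep a (x / (x - 1)) b'c.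
rewrite (_ : mmul (minv b') c = b) in h2; last by rewrite /b'; meq.
have nz0 : g b * g b' != 0 by rewrite mulf_neq0 ?g_neq0.
apply: (mulIf nz0); rewrite h1 (II_pfaff _ _ _ x1).
by rewrite -[RHS]mulrA [g b * g b']mulrC h2; ring.
Qed.

Lemma S21_one (a b c : mchar F) : b != mone F -> b != c ->
  S21 a b c 1 * (g (mmul (minv b) c) * gC (mmul c (minv a)))
  = (1 - q) * gC c * g (mmul (mmul (minv b) c) (minv a)).
Proof.
move=> bn bc; set Y := mmul (minv b) c; set Z := mmul Y (minv a).
have h1 := rep a 1 bc.
have hJ : J0 b Z * gC (mmul c (minv a)) = - g Z * g b.
  rewrite J0sym; have := Jac Z bn.
  by rewrite (_ : mmul Z b = mmul c (minv a)) //; rewrite /Z /Y; meq.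
have hII : II a b Y 1 = (1 - q) * J0 b Z.
  rewrite II_split ?oner_neq0 // invr1 subrr ch0 !mulr0 addr0 /J0.
  congr (_ * _); apply: eq_bigr => t _.
  by rewrite mul1r /Z mmulV minvV; ring.
apply: (mulIf (g_neq0 b)).
transitivity ((S21 a b c 1 * (g b * g Y)) * gC (mmul c (minv a))); first by ring.
rewrite h1 hII.
transitivity (- gC c * (1 - q) * (J0 b Z * gC (mmul c (minv a)))); first by ring.
by rewrite hJ; ring.
Qed.


Lemma mmulA (a b c : mchar F) : mmul a (mmul b c) = mmul (mmul a b) c.
Proof. meq. Qed.

Lemma F2_split (al b1 b2 g1 g2 : mchar F) lam y :
  appellF2 psi al b1 b2 g1 g2 lam y = ((1 - q) ^+ 2)^-1 * \sum_(n1 : mchar F)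
    (poch psi al n1 * poch psi b1 n1 / (pochC psi g1 n1 * pochC psi (@eps F) n1) * n1 lam
     * S21 (mmul al n1) b2 g2 y).
Proof.
rewrite /appellF2; congr (_ * _); apply: eq_bigr => n1 Hn1.
rewrite /S21 mulr_sumr; apply: eq_bigr => n2 Hn2.
rewrite -mmulE !pochC_epsE !pochE !pochCE mmulA.
have := g_neq0 al; have := g_neq0 b1; have := g_neq0 b2; have := g_neq0 (mmul al n1).
have := gC_neq0 g1; have := gC_neq0 g2; have := gC_neq0 n1; have := gC_neq0 n2.
have := gC_neq0 (mmul g1 n1); have := gC_neq0 (mmul g2 n2); have := q_neq0.
repeat (let h := fresh "h" in intro h); genG; field; nz.
Qed.

Lemma F2_split2 (al b1 b2 g1 g2 : mchar F) lam y :
  appellF2 psi al b1 b2 g1 g2 lam y = ((1 - q) ^+ 2)^-1 * \sum_(n2 : mchar F)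
    (poch psi al n2 * poch psi b2 n2 / (pochC psi g2 n2 * pochC psi (@eps F) n2) * n2 y
     * S21 (mmul al n2) b1 g1 lam).
Proof.
rewrite /appellF2 exchange_big /=; congr (_ * _); apply: eq_bigr => n2 Hn2.
rewrite /S21 mulr_sumr; apply: eq_bigr => n1 Hn1.
rewrite -mmulE !pochC_epsE !pochE !pochCE (_ : mmul al (mmul n1 n2) = mmul (mmul al n2) n1); last by meq.
have := g_neq0 al; have := g_neq0 b1; have := g_neq0 b2; have := g_neq0 (mmul al n2).
have := gC_neq0 g1; have := gC_neq0 g2; have := gC_neq0 n1; have := gC_neq0 n2.
have := gC_neq0 (mmul g1 n1); have := gC_neq0 (mmul g2 n2); have := q_neq0.
repeat (let h := fresh "h" in intro h); genG; field; nz.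
Qed.


Lemma oneq_neq0 : 1 - q != 0.
Proof.
rewrite subr_eq0 eq_sym /qC pnatr_eq1; apply/eqP => h.
by have := @finNzRing_gt1 F; rewrite h.
Qed.

Lemma sq_trick (x y s t : algC) : s * s = 1 -> t * t = 1 -> x = y * (s * s) * (t * t) -> x = y.
Proof. by move=> -> ->; rewrite !mulr1. Qed.

Lemma main_i (al b1 b2 g1 g2 : mchar F) lam : b2 != mone F -> b2 != g2 ->
  appellF2 psi al b1 b2 g1 g2 lam 1 =
  poch psi (mmul (minv b2) g2) (minv al) / pochC psi g2 (minv al)
  * hyp32 psi al b1 (mmul al (minv g2)) g1 (mmul (mmul al b2) (minv g2)) lam.
Proof.
move=> bn bc.
rewrite F2_split /hyp32 mulrA !mulr_sumr; apply: eq_bigr => n Hn.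
set A := mmul al n.
have S1 := S21_one A bn bc.
have hS : S21 A b2 g2 1 = (1 - q) * gC g2 * g (mmul (mmul (minv b2) g2) (minv A))
    / (g (mmul (minv b2) g2) * gC (mmul g2 (minv A))).
  by rewrite -S1; apply/esym; apply: mulfK; rewrite mulf_neq0 ?g_neq0 ?gC_neq0.
set V := mmul (mmul (mmul al b2) (minv g2)) n.
set U := mmul (mmul al (minv g2)) n.
set V0 := mmul (mmul al b2) (minv g2).
set U0 := mmul al (minv g2).
have R3 : g (mmul (mmul (minv b2) g2) (minv A)) = V (-1) * q / gC V.
  have := gC_inv V; rewrite (_ : minv V = mmul (mmul (minv b2) g2) (minv A)); last first.
    by rewrite /V /A; meq.
  by move=> <-; rewrite mulrAC divff ?gC_neq0 // mul1r.
have R4 : gC (mmul g2 (minv A)) = (mmul g2 (minv A)) (-1) * q / g U.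
  have := gC_inv (mmul g2 (minv A)); rewrite (_ : minv (mmul g2 (minv A)) = U); last first.
    by rewrite /U /A; meq.
  by move=> <-; rewrite mulfK ?g_neq0.
have R1 : g (mmul (mmul (minv b2) g2) (minv al)) = V0 (-1) * q / gC V0.
  have := gC_inv V0; rewrite (_ : minv V0 = mmul (mmul (minv b2) g2) (minv al)); last first.
    by rewrite /V0; meq.
  by move=> <-; rewrite mulrAC divff ?gC_neq0 // mul1r.
have R2 : gC (mmul g2 (minv al)) = (mmul g2 (minv al)) (-1) * q / g U0.
  have := gC_inv (mmul g2 (minv al)); rewrite (_ : minv (mmul g2 (minv al)) = U0); last first.
    by rewrite /U0; meq.
  by move=> <-; rewrite mulfK ?g_neq0.
rewrite hS !pochC_epsE !pochE !pochCE R3 R4 R1 R2.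
rewrite /V /U /V0 /U0 /A !mmulV !minvV ?mmulV !chN1_sq.
clear S1 hS R1 R2 R3 R4 V U V0 U0 A.
have := g_neq0 al; have := g_neq0 b1; have := g_neq0 (mmul al n); have := g_neq0 (mmul b1 n).
have := gC_neq0 g1; have := gC_neq0 (mmul g1 n); have := gC_neq0 n; have := q_neq0.
have := oneq_neq0; have := gC_neq0 (mmul (mmul (mmul al b2) (minv g2)) n).
have := g_neq0 (mmul (mmul al (minv g2)) n); have := g_neq0 (mmul al (minv g2)).
have := gC_neq0 (mmul (mmul al b2) (minv g2)); have := g_neq0 (mmul (minv b2) g2).
have := gC_neq0 g2.
have := chN1_neq0 al; have := chN1_neq0 n; have := chN1_neq0 b2; have := chN1_neq0 g2.
repeat (let h := fresh "h" in intro h).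
apply: (sq_trick (chN1sq al) (chN1sq n)); genG; field; nz.
Qed.


Lemma pochC_neq0 (a n : mchar F) : pochC psi a n != 0.
Proof. by rewrite pochCE mulf_neq0 ?invr_neq0 ?gC_neq0. Qed.
Lemma pochC_eps_neq0 (n : mchar F) : pochC psi (@eps F) n != 0.
Proof. by rewrite pochC_epsE mulf_neq0 ?invr_neq0 ?gC_neq0 ?q_neq0. Qed.

Lemma main_ii (al b1 b2 g1 g2 : mchar F) lam :
  b1 != mone F -> b1 != g1 -> b2 != mone F -> b2 != g2 -> lam != 1 ->
  appellF2 psi al b1 b2 g1 g2 lam (1 - lam) =
  poch psi (mmul (minv b2) g2) (minv al) / pochC psi g2 (minv al) * (al (1 - lam))^-1
  * hyp32 psi al (mmul (minv b1) g1) (mmul al (minv g2)) g1 (mmul (mmul al b2) (minv g2))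
      (lam / (lam - 1)).
Proof.
move=> b1n b1g b2n b2g l1.
have e : appellF2 psi al b1 b2 g1 g2 lam (1 - lam) =
   (al (1 - lam))^-1 * appellF2 psi al (mmul (minv b1) g1) b2 g1 g2 (lam / (lam - 1)) 1.
  rewrite !F2_split2 mulrA [_ * ((1 - q) ^+ 2)^-1]mulrC -mulrA [in RHS]mulr_sumr.
  congr (_ * _); apply: eq_bigr => n2 Hn2.
  rewrite (S21_pfaff _ b1n b1g l1) ch1 mulr1 mmulV invfM.
  have h1 : n2 (1 - lam) != 0 by apply: chNZ; rewrite subr_eq0 eq_sym.
  have h2 : al (1 - lam) != 0 by apply: chNZ; rewrite subr_eq0 eq_sym.
  by field; rewrite pochC_eps_neq0 pochC_neq0 h1 h2.
by rewrite e main_i //; ring.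
Qed.

Lemma ne_of_ratio (b c : mchar F) : mmul b (minv c) != mone F -> b != c.
Proof.
apply: contra => /eqP ->; apply/eqP; apply: mchar_eq => x x0.
by rewrite mmulV minvV moneV x0 divff //; apply: chNZ.
Qed.

End Gauss.

Unset Implicit Arguments.

Theorem theorem3p13 (F : finFieldType) (psi : F -> algC)
  (Hpsi : is_addchar psi) (Hpsi_nt : exists x : F, psi x != 1)
  (al be1 be2 ga1 ga2 : mchar F) :
  ((~~ deltaC al /\ ~~ deltaC be2 /\ ~~ deltaC (cmul be1 (cinv ga1))
     /\ ~~ deltaC (cmul be2 (cinv ga2))) ->
   forall lam : F,
     appellF2 psi al be1 be2 ga1 ga2 lam 1 =
     poch psi (cmul (cinv be2) ga2) (cinv al) / pochC psi ga2 (cinv al)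
     * hyp32 psi al be1 (cmul al (cinv ga2)) ga1
             (cmul (cmul al be2) (cinv ga2)) lam)
  /\
  ((~~ deltaC al /\ ~~ deltaC be1 /\ ~~ deltaC be2
     /\ ~~ deltaC (cmul be1 (cinv ga1)) /\ ~~ deltaC (cmul be2 (cinv ga2))) ->
   forall lam : F, lam != 1 ->
     appellF2 psi al be1 be2 ga1 ga2 lam (1 - lam) =
     poch psi (cmul (cinv be2) ga2) (cinv al) / pochC psi ga2 (cinv al)
     * cinv al (1 - lam)
     * hyp32 psi al (cmul (cinv be1) ga1) (cmul al (cinv ga2)) ga1
             (cmul (cmul al be2) (cinv ga2)) (lam / (lam - 1))).
Proof.
split.
  case=> _ [b2n [_ b2g]] lam.
  rewrite deltaCE in b2n; rewrite -minvE -mmulE deltaCE in b2g.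
  rewrite -!minvE -!mmulE.
  by apply: (main_i Hpsi Hpsi_nt) => //; apply: ne_of_ratio.
case=> _ [b1n [b2n [b1g b2g]]] lam l1.
rewrite deltaCE in b1n; rewrite deltaCE in b2n.
rewrite -minvE -mmulE deltaCE in b1g; rewrite -minvE -mmulE deltaCE in b2g.
rewrite -!minvE -!mmulE minvV.
by apply: (main_ii Hpsi Hpsi_nt) => //; apply: ne_of_ratio.
Qed.
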